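(* Every object $M$ of $\bar{\mathcal{O}}$ is a direct sum of indecomposable objects of $\bar{\mathcal{O}}$.
   Context: $\mathbb{K}$ is an algebraically closed field of characteristic $0$. $\mathfrak{g}=\bigcup_{n\ge1}\mathfrak{g}_n$ is a root-reductive Lie algebra (nested finite-dimensional reductive Lie algebras with nested Cartan subalgebras, each inclusion $\mathfrak{g}_n\hookrightarrow\mathfrak{g}_{n+1}$ a root inclusion). $\mathfrak{h}$ is a splitting maximal toral subalgebra ($\mathfrak{h}\cap\mathfrak{g}_n$ maximal toral in $\mathfrak{g}_n$, $\mathfrak{g}=\mathfrak{h}\oplus\bigoplus_{\alpha\in\Delta}\mathfrak{g}^\alpha$). $\mathfrak{b}=\mathfrak{h}\oplus\mathfrak{n}$, $\mathfrak{n}=\bigoplus_{\alpha\in\Delta^+}\mathfrak{g}^\alpha$, is a splitting Borel subalgebra given by positive roots $\Delta^+$, assumed Dynkin (generated by $\mathfrak{h}$ and the simple root spaces). The extended category $\mathcal{O}$, denoted $\bar{\mathcal{O}}$, is the full subcategory of $\mathfrak{g}$-modules $M$ such that $M$ is an $\mathfrak{h}$-weight module (semisimple over $\mathfrak{h}$) with finite-dimensional weight spaces and $M$ is locally $\mathfrak{n}$-finite ($U(\mathfrak{n})\cdot v$ finite-dimensional for all $v\in M$). *)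

(* Defs.v *)
From HB Require Import structures.
From mathcomp Require Import all_boot all_order all_algebra.
Set Implicit Arguments. Unset Strict Implicit. Unset Printing Implicit Defensive.
Import GRing.Theory.
Local Open Scope ring_scope.

Section LinAlg.
Variables (K : fieldType) (M : lmodType K).

Definition span (S : M -> Prop) : M -> Prop := fun x =>
  exists n (v : 'I_n -> M) (c : 'I_n -> K),
    (forall i, S (v i)) /\ x = \sum_(i < n) c i *: v i.

Definition subspace (S : M -> Prop) : Prop :=
  S 0 /\ forall (a : K) x y, S x -> S y -> S (a *: x + y).

Definition fin_dim (S : M -> Prop) : Prop :=
  exists n (b : 'I_n -> M), forall x, S x <-> span (fun y => exists i, y = b i) x.

Definition subset_of (A B : M -> Prop) : Prop := forall x, A x -> B x.

Definition direct_sum2 (N N1 N2 : M -> Prop) : Prop :=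
  [/\ subset_of N1 N, subset_of N2 N,
      (forall v, N v -> exists v1 v2, [/\ N1 v1, N2 v2 & v = v1 + v2]) &
      (forall v, N1 v -> N2 v -> v = 0)].

Definition direct_sum_family (I : Type) (Ns : I -> M -> Prop) : Prop :=
  (forall v : M, exists k (f : 'I_k -> I) (w : 'I_k -> M),
      (forall j, Ns (f j) (w j)) /\ v = \sum_(j < k) w j) /\
  (forall k (f : 'I_k -> I) (w : 'I_k -> M), injective f ->
      (forall j, Ns (f j) (w j)) -> \sum_(j < k) w j = 0 -> forall j, w j = 0).

End LinAlg.

Section Lie.
Variables (K : fieldType) (L : lmodType K) (br : L -> L -> L).

Definition lie_bracket : Prop :=
  [/\ forall (a : K) x y z, br (a *: x + y) z = a *: br x z + br y z,
      forall (a : K) x y z, br z (a *: x + y) = a *: br z x + br z y,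
      forall x, br x x = 0 &
      forall x y z, br x (br y z) + br y (br z x) + br z (br x y) = 0].

Definition subalgebra (S : L -> Prop) : Prop :=
  subspace S /\ forall x y, S x -> S y -> S (br x y).

Definition ideal_of (S I : L -> Prop) : Prop :=
  [/\ subspace I, subset_of I S & forall x y, S x -> I y -> I (br x y)].

Definition brsp (A B : L -> Prop) : L -> Prop :=
  span (fun z => exists x y, [/\ A x, B y & z = br x y]).

Fixpoint derived (I : L -> Prop) (k : nat) : L -> Prop :=
  if k is k'.+1 then brsp (derived I k') (derived I k') else I.

Fixpoint lcs (S : L -> Prop) (k : nat) : L -> Prop :=
  if k is k'.+1 then brsp S (lcs S k') else S.

Definition solvable_sp (I : L -> Prop) : Prop :=
  exists k, forall x, derived I k x -> x = 0.

Definition nilpotent_sp (S : L -> Prop) : Prop :=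
  exists k, forall x, lcs S k x -> x = 0.

Definition center_of (S : L -> Prop) : L -> Prop :=
  fun x => S x /\ forall y, S y -> br x y = 0.

(* finite-dimensional reductive Lie subalgebra: radical = center, i.e.
   every solvable ideal lies in the center *)
Definition reductive (S : L -> Prop) : Prop :=
  [/\ subalgebra S, fin_dim S &
      forall I, ideal_of S I -> solvable_sp I -> subset_of I (center_of S)].

Definition cartan_of (S H : L -> Prop) : Prop :=
  [/\ subalgebra H, subset_of H S, nilpotent_sp H &
      forall x, S x -> (forall y, H y -> H (br x y)) -> H x].

(* functionals on H (represented by functions L -> K linear on H) *)
Definition linear_on (H : L -> Prop) (lam : L -> K) : Prop :=
  forall (a : K) x y, H x -> H y -> lam (a *: x + y) = a * lam x + lam y.

Definition eq_on (H : L -> Prop) (lam mu : L -> K) : Prop :=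
  forall x, H x -> lam x = mu x.

Definition rootsp (S H : L -> Prop) (lam : L -> K) : L -> Prop :=
  fun x => S x /\ forall h, H h -> br h x = lam h *: x.

Definition is_root (S H : L -> Prop) (lam : L -> K) : Prop :=
  [/\ linear_on H lam, exists h, H h /\ lam h != 0 &
      exists x, rootsp S H lam x /\ x != 0].

Definition root_inclusion (S H S' H' : L -> Prop) : Prop :=
  [/\ subset_of S S', subset_of H H' &
      forall alpha, is_root S H alpha ->
        exists beta, is_root S' H' beta /\
          subset_of (rootsp S H alpha) (rootsp S' H' beta)].

Definition ad_semisimple (S : L -> Prop) (x : L) : Prop :=
  forall y, S y -> span (fun z => S z /\ exists c : K, br x z = c *: z) y.

Definition toral_of (S T : L -> Prop) : Prop :=
  [/\ subalgebra T, subset_of T S & forall x, T x -> ad_semisimple S x].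

Definition max_toral_of (S T : L -> Prop) : Prop :=
  toral_of S T /\
  forall T', toral_of S T' -> subset_of T T' -> subset_of T' T.

Definition wholeL : L -> Prop := fun _ => True.

Definition root_reductive (gs Hs : nat -> L -> Prop) : Prop :=
  [/\ lie_bracket,
      forall n, reductive (gs n),
      forall n, cartan_of (gs n) (Hs n),
      forall n, root_inclusion (gs n) (Hs n) (gs n.+1) (Hs n.+1) &
      forall x, exists n, gs n x].

Definition groot (h : L -> Prop) (alpha : L -> K) : Prop :=
  is_root wholeL h alpha.

Definition splitting_max_toral (gs : nat -> L -> Prop) (h : L -> Prop) : Prop :=
  [/\ subalgebra h,
      forall n, max_toral_of (gs n) (fun x => h x /\ gs n x) &
      forall x, span (fun y => h y \/ exists alpha, groot h alpha /\
                                     rootsp wholeL h alpha y) x].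

Definition positive_system (h : L -> Prop) (P : (L -> K) -> Prop) : Prop :=
  [/\ forall a b, eq_on h a b -> P a -> P b,
      forall a, P a -> groot h a,
      forall a, groot h a -> (P a \/ P (fun x => - a x)) /\
                             ~ (P a /\ P (fun x => - a x)) &
      forall a b, P a -> P b -> groot h (fun x => a x + b x) ->
                  P (fun x => a x + b x)].

Definition nilrad (h : L -> Prop) (P : (L -> K) -> Prop) : L -> Prop :=
  span (fun y => exists alpha, P alpha /\ rootsp wholeL h alpha y).

Definition borel (h : L -> Prop) (P : (L -> K) -> Prop) : L -> Prop :=
  span (fun y => h y \/ nilrad h P y).

Definition simple_root (h : L -> Prop) (P : (L -> K) -> Prop) (a : L -> K) :=
  P a /\ ~ exists b c, [/\ P b, P c & eq_on h a (fun x => b x + c x)].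

Definition gen_subalg (A : L -> Prop) : L -> Prop :=
  fun x => forall S, subalgebra S -> subset_of A S -> S x.

Definition dynkin (h : L -> Prop) (P : (L -> K) -> Prop) : Prop :=
  subset_of (borel h P)
    (gen_subalg (fun y => h y \/ exists a, simple_root h P a /\
                                    rootsp wholeL h a y)).

Section Modules.
Variables (V : lmodType K) (act : L -> V -> V).

Definition lie_module : Prop :=
  [/\ forall (a : K) x y v, act (a *: x + y) v = a *: act x v + act y v,
      forall (a : K) x v w, act x (a *: v + w) = a *: act x v + act x w &
      forall x y v, act (br x y) v = act x (act y v) - act y (act x v)].

Definition weight_space (h : L -> Prop) (lam : L -> K) : V -> Prop :=
  fun v => forall t, h t -> act t v = lam t *: v.

(* U(n) . v : smallest subspace containing v and stable under n *)
Definition Un_orbit (n : L -> Prop) (v : V) : V -> Prop :=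
  fun w => forall S, subspace S -> S v ->
             (forall x u, n x -> S u -> S (act x u)) -> S w.

Definition in_Obar (h : L -> Prop) (P : (L -> K) -> Prop) : Prop :=
  [/\
      forall v, span (fun w => exists lam, linear_on h lam /\
                                 weight_space h lam w) v,
      forall lam, linear_on h lam -> fin_dim (weight_space h lam) &
      forall v, fin_dim (Un_orbit (nilrad h P) v)].

Definition submodule (N : V -> Prop) : Prop :=
  subspace N /\ forall x v, N v -> N (act x v).

Definition indecomposable (N : V -> Prop) : Prop :=
  [/\ submodule N, exists v, N v /\ v != 0 &
      ~ exists N1 N2, [/\ submodule N1, submodule N2,
                          exists v, N1 v /\ v != 0,
                          exists v, N2 v /\ v != 0 &
                          direct_sum2 N N1 N2]].

End Modules.
End Lie.

(* Main.v *)
Require Import Defs.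
From HB Require Import structures.
From mathcomp Require Import all_boot all_order all_algebra.
From mathcomp Require Import boolp classical_sets.
From mathcomp Require Import zify.
Set Implicit Arguments. Unset Strict Implicit. Unset Printing Implicit Defensive.
Import GRing.Theory.
Local Open Scope ring_scope.


Section Basics.
Variables (K : fieldType) (L V : lmodType K) (act : L -> V -> V).
Hypothesis actlin : forall (a : K) x v w, act x (a *: v + w) = a *: act x v + act x w.

Lemma act0 x : act x 0 = 0.
Proof.
have H := actlin 1 x 0 0; rewrite !scale1r !addr0 in H.
by apply: (addrI (act x 0)); rewrite addr0 -H.
Qed.

Lemma actD x v w : act x (v + w) = act x v + act x w.
Proof. by have := actlin 1 x v w; rewrite !scale1r. Qed.

Lemma actZ x a v : act x (a *: v) = a *: act x v.
Proof. by have := actlin a x v 0; rewrite !addr0 act0 addr0. Qed.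

Lemma actN x v : act x (- v) = - act x v.
Proof. by rewrite -scaleN1r actZ scaleN1r. Qed.

Lemma act_sum x (I : Type) (r : seq I) (P : pred I) (F : I -> V) :
  act x (\sum_(i <- r | P i) F i) = \sum_(i <- r | P i) act x (F i).
Proof. exact: (big_morph _ (actD x) (act0 x)). Qed.

Lemma sub0 (N : V -> Prop) : subspace N -> N 0.
Proof. by case. Qed.
Lemma subD (N : V -> Prop) x y : subspace N -> N x -> N y -> N (x + y).
Proof. by case=> _ H Hx Hy; have := H 1 _ _ Hx Hy; rewrite scale1r. Qed.
Lemma subZ (N : V -> Prop) a x : subspace N -> N x -> N (a *: x).
Proof. by case=> H0 H Hx; have := H a _ _ Hx H0; rewrite addr0. Qed.
Lemma subN (N : V -> Prop) x : subspace N -> N x -> N (- x).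
Proof. by move=> Hs Hx; rewrite -scaleN1r; apply: subZ. Qed.
Lemma subsum (N : V -> Prop) (I : Type) (r : seq I) (P : pred I) (F : I -> V) :
  subspace N -> (forall i, P i -> N (F i)) -> N (\sum_(i <- r | P i) F i).
Proof.
move=> Hs HF; apply: (big_ind N) => //; first exact: sub0.
by move=> x y; apply: subD.
Qed.

Definition piece := V -> Prop.
Definition props (D : piece -> Prop) (s : seq (piece * V)) :=
  forall p, p \in s -> D p.1 /\ p.1 p.2.
Definition nzsub (N : piece) := submodule act N /\ exists v, N v /\ v != 0.
Definition sumL (s : seq (piece * V)) := \sum_(p <- s) p.2.
Definition decomp (D : piece -> Prop) :=
  [/\ forall N, D N -> nzsub N,
      forall v, exists s, props D s /\ v = sumL s &
      forall s, props D s -> sumL s = 0 ->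
         forall N, \sum_(p <- s | p.1 == N) p.2 = 0].
Definition refines (D D' : piece -> Prop) :=
  forall N', D' N' -> exists N, D N /\ subset_of N' N.
Definition keys (s : seq (piece * V)) := map fst s.

Lemma props_cons D p s : props D (p :: s) <-> (D p.1 /\ p.1 p.2) /\ props D s.
Proof.
split=> [H|[Hp Hs] q]; first by split=> [|q qs]; apply: H; rewrite inE ?eqxx ?qs ?orbT.
by rewrite inE => /orP[/eqP->|/Hs].
Qed.

Lemma props_cat D s1 s2 : props D (s1 ++ s2) <-> props D s1 /\ props D s2.
Proof.
split=> [H|[H1 H2] q]; first by split=> q qs; apply: H; rewrite mem_cat qs ?orbT.
by rewrite mem_cat => /orP[/H1|/H2].
Qed.

Lemma decomp_sub D N : decomp D -> D N -> subspace N.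
Proof. by case=> H _ _ /H [[]]. Qed.

Lemma unique_piece D M N x : decomp D -> D M -> D N -> M x -> N x -> x != 0 -> M = N.
Proof.
move=> dD DM DN Mx Nx x0; apply/eqP/negPn/negP => MN.
have := dD; case=> _ _ /(_ [:: (M, x); (N, - x)]) H.
have /H : props D [:: (M, x); (N, - x)].
  move=> p; rewrite !inE => /orP[/eqP->|/eqP->] //=.
  by split=> //; apply: subN => //; exact: decomp_sub dD DN.
rewrite /sumL !big_cons big_nil addr0 subrr => /(_ erefl M).
rewrite !big_cons big_nil /= eqxx eq_sym (negbTE MN) addr0 => x00.
by move: x0; rewrite x00 eqxx.
Qed.

Lemma group_uniq (s : seq (piece * V)) p : uniq (keys s) -> p \in s ->
  \sum_(q <- s | q.1 == p.1) q.2 = p.2.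
Proof.
elim: s => // a s IH /= /andP[aks us]; rewrite inE => /orP[/eqP->|ps].
  rewrite big_cons eqxx big1_seq ?addr0 // => q /andP[/eqP qa qs].
  by move: aks; rewrite -qa; move/negP; case; apply: map_f.
rewrite big_cons IH //; case: eqP => // ap.
by move: aks; rewrite ap; move/negP; case; apply: map_f.
Qed.

Lemma indep_uniq D s : decomp D -> props D s -> uniq (keys s) -> sumL s = 0 ->
  forall p, p \in s -> p.2 = 0.
Proof.
move=> [_ _ H] ps us s0 p pin; rewrite -(group_uniq us pin); exact: H.
Qed.

End Basics.


Section Collect.
Variables (K : fieldType) (L V : lmodType K) (act : L -> V -> V).

Lemma regroup (s : seq (piece V * V)) :
  \sum_(N <- undup (keys s)) \sum_(q <- s | q.1 == N) q.2 = sumL s.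
Proof.
rewrite /sumL.
transitivity (\sum_(N <- undup (keys s)) \sum_(q <- s) (if q.1 == N then q.2 else 0)).
  by apply: eq_bigr => N _; rewrite big_mkcond.
rewrite exchange_big [RHS]big_seq big_seq; apply: eq_bigr => q qs.
rewrite -big_mkcond -big_filter.
rewrite (eq_filter (a2 := pred1 q.1)); last by move=> N /=; rewrite eq_sym.
by rewrite filter_pred1_uniq ?undup_uniq ?mem_undup ?big_seq1 //; apply: map_f.
Qed.

Lemma collect D s : decomp act D -> props D s -> exists s',
  [/\ props D s', uniq (keys s'), (forall p, p \in s' -> p.2 != 0),
      sumL s' = sumL s &
      forall p, p \in s' -> p.2 = \sum_(q <- s | q.1 == p.1) q.2].
Proof.
move=> dD ps.
pose s1 := [seq (N, \sum_(q <- s | q.1 == N) q.2) | N <- undup (keys s)].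
have ks1 : keys s1 = undup (keys s).
  by rewrite /keys /s1 -map_comp map_id_in.
have s1P p : p \in s1 -> p.1 \in keys s /\ p.2 = \sum_(q <- s | q.1 == p.1) q.2.
  by case/mapP => N; rewrite mem_undup => Ns ->.
exists [seq p <- s1 | p.2 != 0]; split.
- move=> p; rewrite mem_filter => /andP[_ /s1P[/mapP[q qs ->] ->]].
  have [Dq _] := ps q qs; split=> //.
  rewrite big_seq_cond; apply: subsum; first exact: decomp_sub dD Dq.
  by move=> r /andP[rs /eqP <-]; have [] := ps r rs.
- apply: (subseq_uniq (s2 := keys s1)); last by rewrite ks1 undup_uniq.
  exact/map_subseq/filter_subseq.
- by move=> p; rewrite mem_filter => /andP[].
- rewrite -(regroup s) /sumL big_filter /s1 big_map.
  by rewrite big_mkcond; apply: eq_bigr => N _ /=; case: eqP.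
- by move=> p; rewrite mem_filter => /andP[_ /s1P[]].
Qed.
End Collect.


Section Weights.
Variables (K : fieldType) (L V : lmodType K) (act : L -> V -> V) (h : L -> Prop).
Hypothesis actlin : forall (a : K) x v w, act x (a *: v + w) = a *: act x v + act x w.

Lemma decomp_submod D N : decomp act D -> D N -> submodule act N.
Proof. by case=> H _ _ /H []. Qed.

Lemma group_weight D s lam v : decomp act D -> props D s -> v = sumL s ->
  weight_space act h lam v ->
  forall N, weight_space act h lam (\sum_(p <- s | p.1 == N) p.2).
Proof.
move=> dD ps vs wv N t ht.
pose st := [seq (p.1, act t p.2 - lam t *: p.2) | p <- s].
have pst : props D st.
  move=> p /mapP[q qs ->] /=; have [Dq Qq] := ps q qs; split=> //.
  have [Hs Ha] := decomp_submod dD Dq.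
  by apply: subD => //; [apply: Ha | apply: subN => //; apply: subZ].
have sst : sumL st = 0.
  rewrite /sumL big_map /= sumrB -act_sum // -scaler_sumr.
  by rewrite -/(sumL s) -vs wv // subrr.
have := dD; case=> _ _ /(_ st pst sst N); rewrite big_map /= sumrB.
by rewrite -act_sum // -scaler_sumr => /eqP; rewrite subr_eq0 => /eqP.
Qed.

Lemma comp_weight D s lam : decomp act D -> props D s -> uniq (keys s) ->
  weight_space act h lam (sumL s) ->
  forall p, p \in s -> weight_space act h lam p.2.
Proof.
move=> dD ps us ws p pin; rewrite -(group_uniq us pin).
exact: (group_weight dD ps erefl ws).
Qed.

Lemma nested Ds D Q x t : decomp act Ds -> decomp act D -> refines Ds D ->
  Ds Q -> Q x -> props D t -> uniq (keys t) -> (forall r, r \in t -> r.2 != 0) ->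
  sumL t = x -> forall r, r \in t -> subset_of r.1 Q.
Proof.
move=> dDs dD rf DsQ Qx pt ut nz tx r0 r0t.
pose G (R : piece V) := xget (fun _ => False) (fun M => Ds M /\ subset_of R M).
have GP r : r \in t -> Ds (G r.1) /\ subset_of r.1 (G r.1).
  move=> rt; apply: (xgetPex (fun _ : V => False) (P := fun M => Ds M /\ subset_of r.1 M)).
  have [Dr _] := pt r rt; exact: rf.
case: (pselect (subset_of r0.1 Q)) => // nsub; exfalso.
have GQ : Q != G r0.1.
  by apply/eqP => QG; apply: nsub; rewrite QG; case: (GP r0 r0t).
pose u := (Q, - x) :: [seq (G r.1, r.2) | r <- t].
have pu : props Ds u.
  apply/props_cons; split; first by split=> //; apply: subN => //; exact: decomp_sub dDs DsQ.
  move=> p /mapP[r rt ->] /=; have [Gr sr] := GP r rt; split=> //; apply: sr.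
  by case: (pt r rt).
have su : sumL u = 0 by rewrite /sumL big_cons big_map -/(sumL t) tx addNr.
have := dDs; case=> _ _ /(_ u pu su (G r0.1)).
rewrite big_cons /= (negbTE GQ) big_map /= => H.
pose t' := [seq r <- t | G r.1 == G r0.1].
have pt' : props D t' by move=> p; rewrite mem_filter => /andP[_ /pt].
have ut' : uniq (keys t') by apply: subseq_uniq ut; exact/map_subseq/filter_subseq.
have st' : sumL t' = 0 by rewrite /sumL big_filter.
have r0t' : r0 \in t' by rewrite mem_filter eqxx.
by have := indep_uniq dD pt' ut' st' r0t'; apply/eqP; apply: nz.
Qed.

End Weights.


Section Steinitz.
Variables (K : fieldType) (V : lmodType K).

Lemma span_coef (n : nat) (b : 'I_n -> V) x :
  Defs.span (fun y => exists i, y = b i) x -> exists a : 'I_n -> K, x = \sum_l a l *: b l.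
Proof.
case=> m [v [c [Hv ->]]]; elim: m v c Hv => [|m IH] v c Hv.
  exists (fun _ => 0); rewrite big_ord0; symmetry; rewrite big1 // => l _.
  by rewrite scale0r.
rewrite big_ord_recr /=.
have [a ->] := IH (fun i => v (widen_ord (leqnSn m) i)) (fun i => c (widen_ord (leqnSn m) i))
  (fun i => Hv _).
have [l0 ->] := Hv ord_max.
exists (fun l => a l + (if l == l0 then c ord_max else 0)).
under [RHS]eq_bigr do rewrite scalerDl.
rewrite big_split /=; congr (_ + _).
rewrite (bigD1 l0) //= eqxx big1 ?addr0 // => l /negbTE ->.
by rewrite scale0r.
Qed.

Lemma steinitz (n k : nat) (b : 'I_n -> V) (y : 'I_k -> V) :
  (forall i, Defs.span (fun z => exists l, z = b l) (y i)) ->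
  (forall c : 'I_k -> K, \sum_i c i *: y i = 0 -> forall i, c i = 0) ->
  (k <= n)%N.
Proof.
move=> Hy Hind.
have /fin_all_exists [a Ha] : forall i, exists a : 'I_n -> K, y i = \sum_l a l *: b l.
  by move=> i; apply: span_coef.
pose A : 'M[K]_(k, n) := \matrix_(i, l) a i l.
rewrite leqNgt; apply/negP => nk.
have : ~~ row_free A.
  by rewrite /row_free; apply/negP => /eqP rk; move: (rank_leq_col A); rewrite rk leqNgt nk.
rewrite -kermx_eq0 => kn0.
have [i0 ri0] : exists i0, row i0 (kermx A) != 0.
  case: (pselect (exists i0, row i0 (kermx A) != 0)) => // H; exfalso.
  move/negP: kn0; apply; apply/eqP/row_matrixP => i; rewrite row0.
  by apply/eqP/negPn/negP => Hi; apply: H; exists i.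
set c := row i0 (kermx A).
have cA : c *m A = 0 by rewrite /c -row_mul mulmx_ker row0.
have : \sum_i c 0 i *: y i = 0.
  transitivity (\sum_i \sum_l (c 0 i * a i l) *: b l).
    by apply: eq_bigr => i _; rewrite Ha scaler_sumr; apply: eq_bigr => l _; rewrite scalerA.
  rewrite exchange_big /=; apply: big1 => l _; rewrite -scaler_suml.
  have : (c *m A) 0 l = 0 by rewrite cA mxE.
  rewrite mxE => H.
  have -> : \sum_i c 0 i * a i l = 0.
    by apply: (etrans _ H); apply: eq_bigr => i _; congr (_ * _); rewrite /A mxE.
  by rewrite scale0r.
move/Hind => c0; apply/negP: ri0; apply/negPn/eqP/rowP => j.
by rewrite c0 mxE.
Qed.
End Steinitz.


Section Bound.
Variables (K : fieldType) (L V : lmodType K) (act : L -> V -> V) (h : L -> Prop).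
Hypothesis actlin : forall (a : K) x v w, act x (a *: v + w) = a *: act x v + act x w.

Lemma split_bound D s lam n (b : 'I_n -> V) : decomp act D -> props D s ->
  uniq (keys s) -> (forall p, p \in s -> p.2 != 0) ->
  (forall x, weight_space act h lam x <-> Defs.span (fun y => exists i, y = b i) x) ->
  weight_space act h lam (sumL s) -> (size s <= n)%N.
Proof.
move=> dD ps us nz hb ws.
pose x0 : piece V * V := (fun _ => False, 0).
pose y (i : 'I_(size s)) := (nth x0 s i).2.
have ins (i : 'I_(size s)) : nth x0 s i \in s by apply: mem_nth.
apply: (@steinitz _ _ _ _ b y).
  by move=> i; apply/hb; apply: (comp_weight actlin dD ps us ws); apply: ins.
move=> c Hc i0.
pose sc := [seq ((nth x0 s i).1, c i *: (nth x0 s i).2) | i : 'I_(size s) <- enum 'I_(size s)].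
have psc : props D sc.
  move=> p /mapP[i _ ->] /=; have [Di si] := ps _ (ins i); split=> //.
  by apply: subZ => //; exact: decomp_sub dD Di.
have ssc : sumL sc = 0.
  by rewrite /sumL big_map big_enum /=; apply: etrans _ Hc; apply: eq_bigl => i; rewrite inE.
have := dD; case=> _ _ /(_ sc psc ssc (nth x0 s i0).1).
rewrite big_map big_enum_cond /= (big_pred1 i0).
  move/eqP; rewrite GRing.scaler_eq0 => /orP[/eqP //|].
  by move/negP: (nz _ (ins i0)).
move=> i /=.
have Hi : (i < size (keys s))%N by rewrite size_map.
have Hi0 : (i0 < size (keys s))%N by rewrite size_map.
have := nth_uniq x0.1 Hi Hi0 us.
by rewrite /keys !(nth_map x0) ?ltn_ord // => ->.
Qed.
End Bound.


Lemma refines_refl (K : fieldType) (V : lmodType K) (D : piece V -> Prop) : refines D D.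
Proof. by move=> N DN; exists N; split=> // x. Qed.

Lemma refines_trans (K : fieldType) (V : lmodType K) (D1 D2 D3 : piece V -> Prop) :
  refines D1 D2 -> refines D2 D3 -> refines D1 D3.
Proof.
move=> r12 r23 N DN; have [M [DM NM]] := r23 N DN; have [P [DP MP]] := r12 M DM.
by exists P; split=> // x /NM /MP.
Qed.

Section Limit.
Variables (K : fieldType) (L V : lmodType K) (act : L -> V -> V).
Variable C : (piece V -> Prop) -> Prop.
Hypothesis Cdec : forall D, C D -> decomp act D.
Hypothesis Ctot : forall D D', C D -> C D' -> refines D D' \/ refines D' D.
Hypothesis Cne : exists D, C D.

Definition pure (w : V) := forall D, C D -> exists M, D M /\ M w.
Definition Lam (w : V) : piece V := fun u => forall D, C D -> forall M, D M -> M w -> M u.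
Definition LimD (N : piece V) := exists w, [/\ pure w, w != 0 & N = Lam w].
Definition sep (D : piece V -> Prop) (w1 w2 : V) := ~ exists P, [/\ D P, P w1 & P w2].
Definition wit (N : piece V) := xget 0 (fun w => [/\ pure w, w != 0 & N = Lam w]).

Lemma witP N : LimD N -> [/\ pure (wit N), wit N != 0 & N = Lam (wit N)].
Proof. by move=> H; apply: (xgetPex 0 (P := fun w => [/\ pure w, w != 0 & N = Lam w])). Qed.

Lemma Lam_in w : Lam w w.
Proof. by []. Qed.

Lemma Lam_submod w : submodule act (Lam w).
Proof.
split; first split.
- by move=> D CD M DM _; apply: sub0; exact: decomp_sub (Cdec CD) DM.
- move=> a x y Hx Hy D CD M DM Mw.
  by have [_ H] := decomp_sub (Cdec CD) DM; apply: H; [exact: Hx CD M DM Mw | exact: Hy CD M DM Mw].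
- move=> x v Hv D CD M DM Mw.
  by have [_ H] := decomp_submod (Cdec CD) DM; apply: H; exact: Hv CD M DM Mw.
Qed.

Lemma LimD_nz N : LimD N -> nzsub act N.
Proof. by case=> w [_ w0 ->]; split; [exact: Lam_submod | exists w; split]. Qed.

Lemma C_refines_Lim D : C D -> refines D LimD.
Proof.
move=> CD N [w [pw _ ->]]; have [M [DM Mw]] := pw D CD.
by exists M; split=> // u Hu; exact: Hu D CD M DM Mw.
Qed.

Lemma chain_ub (X : eqType) (s : seq X) (F : X -> piece V -> Prop) :
  (forall x, x \in s -> C (F x)) -> exists D, C D /\ forall x, x \in s -> refines (F x) D.
Proof.
elim: s => [|a s IH] H; first by have [D CD] := Cne; exists D.
have [|D [CD HD]] := IH; first by move=> x xs; apply: H; rewrite inE xs orbT.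
have CFa : C (F a) by apply: H; rewrite inE eqxx.
case: (Ctot CFa CD) => rf.
  exists D; split=> // x; rewrite inE => /orP[/eqP -> //|]; exact: HD.
exists (F a); split=> // x; rewrite inE => /orP[/eqP ->|/HD xs]; first exact: refines_refl.
exact: refines_trans xs rf.
Qed.

Lemma sep_mono D D' w1 w2 : refines D D' -> sep D w1 w2 -> sep D' w1 w2.
Proof.
move=> rf H [P [DP P1 P2]]; apply: H; have [M [DM PM]] := rf P DP.
by exists M; split=> //; apply: PM.
Qed.

Lemma sep_one w1 w2 u : pure w2 -> w2 != 0 -> Lam w1 u -> ~ Lam w2 u ->
  exists D, C D /\ sep D w1 w2.
Proof.
move=> p2 nz2 L1 nL2.
case: (pselect (exists D M, [/\ C D, D M, M w2 & ~ M u])) => [[D [M [CD DM Mw2 nMu]]]|nex].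
  exists D; split=> // -[P [DP Pw1 Pw2]].
  have PM := unique_piece (Cdec CD) DP DM Pw2 Mw2 nz2.
  by apply: nMu; apply: (L1 D CD M DM); rewrite -PM.
exfalso; apply: nL2 => D CD M DM Mw2.
case: (pselect (M u)) => // nMu; exfalso; apply: nex; by exists D, M.
Qed.

Lemma sep_sym D w1 w2 : sep D w1 w2 -> sep D w2 w1.
Proof. by move=> H [P [DP P1 P2]]; apply: H; exists P. Qed.

Lemma sep_exists N1 N2 : LimD N1 -> LimD N2 -> N1 != N2 ->
  exists D, C D /\ sep D (wit N1) (wit N2).
Proof.
move=> /witP[p1 nz1 e1] /witP[p2 nz2 e2] ne.
case: (pselect (exists u, Lam (wit N1) u /\ ~ Lam (wit N2) u)) => [[u [H1 H2]]|n1].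
  exact: sep_one H1 H2.
case: (pselect (exists u, Lam (wit N2) u /\ ~ Lam (wit N1) u)) => [[u [H1 H2]]|n2].
  by have [D [CD sD]] := sep_one p1 nz1 H1 H2; exists D; split=> //; apply: sep_sym.
exfalso; move/eqP: ne; apply; rewrite e1 e2; apply: funext => u; apply: propext.
split=> H.
  by case: (pselect (Lam (wit N2) u)) => // H'; exfalso; apply: n1; exists u.
by case: (pselect (Lam (wit N1) u)) => // H'; exfalso; apply: n2; exists u.
Qed.

Lemma Lim_indep s : props LimD s -> sumL s = 0 ->
  forall N, \sum_(p <- s | p.1 == N) p.2 = 0.
Proof.
move=> ps s0 N.
pose pairs := [seq (p, q) | p <- s, q <- s].
pose F (pq : (piece V * V) * (piece V * V)) := xget (fun _ => False)
   (fun D => C D /\ (pq.1.1 != pq.2.1 -> sep D (wit pq.1.1) (wit pq.2.1))).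
have FP pq : pq \in pairs -> C (F pq) /\ (pq.1.1 != pq.2.1 -> sep (F pq) (wit pq.1.1) (wit pq.2.1)).
  move=> /allpairsP[[p q] [/= pin qin ->]] /=.
  apply: (xgetPex (fun _ => False) (P := fun D => C D /\ (p.1 != q.1 -> sep D (wit p.1) (wit q.1)))).
  case: (boolP (p.1 == q.1)) => [_|ne].
    by have [D CD] := Cne; exists D.
  have [D [CD sD]] := sep_exists (proj1 (ps p pin)) (proj1 (ps q qin)) ne.
  by exists D.
have [D [CD HD]] := chain_ub (fun pq pin => proj1 (FP pq pin)).
have dD := Cdec CD.
pose G (M : piece V) := xget (fun _ => False) (fun P => D P /\ subset_of M P).
have GP p : p \in s -> D (G p.1) /\ subset_of p.1 (G p.1).
  move=> pin; apply: (xgetPex (fun _ => False) (P := fun P => D P /\ subset_of p.1 P)).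
  exact: C_refines_Lim CD _ (proj1 (ps p pin)).
have Ginj p q : p \in s -> q \in s -> G p.1 = G q.1 -> p.1 = q.1.
  move=> pin qin GE; apply/eqP; case: (boolP (p.1 == q.1)) => // ne; exfalso.
  have pqin : (p, q) \in pairs by apply: allpairs_f.
  have [_ /(_ ne) sF] := FP _ pqin.
  apply: (sep_mono (HD _ pqin) sF); exists (G p.1); split; first by case: (GP p pin).
    have [_ _ e] := witP (proj1 (ps p pin)); case: (GP p pin) => _; apply.
    by rewrite /= {1}e; exact: Lam_in.
  have [_ _ e] := witP (proj1 (ps q qin)); rewrite GE; case: (GP q qin) => _; apply.
  by rewrite /= {1}e; exact: Lam_in.
pose sD := [seq (G p.1, p.2) | p <- s].
have psD : props D sD.
  move=> r /mapP[p pin ->] /=; have [GD sG] := GP p pin; split=> //.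
  by apply: sG; case: (ps p pin).
have ssD : sumL sD = 0 by rewrite /sumL big_map.
case: (pselect (exists2 p0, p0 \in s & p0.1 = N)) => [[p0 p0in e0]|nex].
  have [_ _ /(_ sD psD ssD (G N))] := dD; rewrite big_map /= => H.
  apply: etrans _ H; rewrite big_seq_cond [RHS]big_seq_cond; apply: eq_bigl => p /=.
  case: (boolP (p \in s)) => //= pin; apply/eqP/eqP => [->//|GE].
  by rewrite -e0; apply: Ginj => //; rewrite e0.
rewrite big1_seq // => p /andP[/eqP pN pin]; exfalso; apply: nex; by exists p.
Qed.
End Limit.


Lemma sumn_ge0 (X : eqType) (s : seq X) (f : X -> nat) :
  (forall q, q \in s -> (0 < f q)%N) -> (size s <= sumn (map f s))%N.
Proof.
elim: s => //= a s IH H.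
have H' : forall q, q \in s -> (0 < f q)%N by move=> q qs; apply: H; rewrite inE qs orbT.
have := H a (mem_head _ _); have := IH H'; lia.
Qed.

Lemma sumn_ge (X : eqType) (s : seq X) (f : X -> nat) p :
  (forall q, q \in s -> (0 < f q)%N) -> p \in s ->
  (size s + (f p - 1) <= sumn (map f s))%N.
Proof.
elim: s => //= a s IH H.
have H' : forall q, q \in s -> (0 < f q)%N by move=> q qs; apply: H; rewrite inE qs orbT.
rewrite inE => /orP[/eqP->|ps].
  have := H a (mem_head _ _); have := sumn_ge0 H'; lia.
have := H a (mem_head _ _); have := IH H' ps; lia.
Qed.

Section LimSpan.
Variables (K : fieldType) (L V : lmodType K) (act : L -> V -> V) (h : L -> Prop).
Hypothesis actlin : forall (a : K) x v w, act x (a *: v + w) = a *: act x v + act x w.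
Variable C : (piece V -> Prop) -> Prop.
Hypothesis Cdec : forall D, C D -> decomp act D.
Hypothesis Ctot : forall D D', C D -> C D' -> refines D D' \/ refines D' D.
Hypothesis Cne : exists D, C D.

Lemma Lim_span_weight lam n (b : 'I_n -> V) w :
  (forall x, weight_space act h lam x <-> Defs.span (fun y => exists i, y = b i) x) ->
  weight_space act h lam w -> exists s, props (LimD C) s /\ w = sumL s.
Proof.
move=> hb ww.
pose splits D k := exists s, [/\ props D s, uniq (keys s),
   (forall p, p \in s -> p.2 != 0), sumL s = w & size s = k].
pose Ks k := exists D, C D /\ splits D k.
have Kb k : Ks k -> (k <= n)%N.
  move=> [D [CD [s [ps us nz sw <-]]]].
  by apply: (split_bound actlin (Cdec CD) ps us nz hb); rewrite sw.
have Ke : exists k, `[< Ks k >].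
  have [D CD] := Cne; have [_ /(_ w) [s [ps sw]] _] := Cdec CD.
  have [s' [ps' us' nz' ss' _]] := collect (Cdec CD) ps.
  exists (size s'); apply/asboolP; exists D; split => //; exists s'; split => //.
  by rewrite ss' sw.
have Kub : forall k, `[< Ks k >] -> (k <= n)%N by move=> k /asboolP; exact: Kb.
case: (ex_maxnP Ke Kub) => km /asboolP [Ds [CDs [ss [pss uss nzs sss szs]]]] kmax.
have dDs := Cdec CDs.
have pureP : forall p, p \in ss -> pure C p.2.
  move=> p pin D CD; case: (Ctot CD CDs) => rf.
    have [DsP Pp] := pss p pin; have [M [DM sM]] := rf _ DsP.
    by exists M; split => //; apply: sM.
  have dD := Cdec CD.
  pose T (q : piece V * V) := xget [::] (fun t => [/\ props D t, uniq (keys t),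
       (forall r, r \in t -> r.2 != 0) & sumL t = q.2]).
  have TP q : [/\ props D (T q), uniq (keys (T q)),
       (forall r, r \in T q -> r.2 != 0) & sumL (T q) = q.2].
    apply: (xgetPex [::] (P := fun t => [/\ props D t, uniq (keys t),
       (forall r, r \in t -> r.2 != 0) & sumL t = q.2])).
    have [_ /(_ q.2) [s [ps sw]] _] := dD; have [s' [ps' us' nz' ss' _]] := collect dD ps.
    by exists s'; split => //; rewrite ss' sw.
  have Tsub q : q \in ss -> forall r, r \in T q -> subset_of r.1 q.1.
    move=> qin; have [pT uT nzT sT] := TP q; have [DsQ Qq] := pss q qin.
    exact: (nested dDs dD rf DsQ Qq pT uT nzT sT).
  pose big := flatten [seq T q | q <- ss].
  have pbig : props D big.
    by move=> r /flatten_mapP[q _ rin]; case: (TP q) => pT _ _ _; apply: pT.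
  have nzbig : forall r, r \in big -> r.2 != 0.
    by move=> r /flatten_mapP[q _ rin]; case: (TP q) => _ _ nzT _; apply: nzT.
  have sbig : sumL big = w.
    rewrite /sumL big_flatten /= big_map -sss /sumL; apply: eq_bigr => q _.
    by case: (TP q).
  have ubig : forall s0, (forall q, q \in s0 -> q \in ss) -> uniq (keys s0) ->
      uniq (keys (flatten [seq T q | q <- s0])).
    elim => [|q s0 IH] //= Hs /andP[qn us0].
    have qin : q \in ss by apply: Hs; rewrite inE eqxx.
    rewrite /keys map_cat cat_uniq -!/(keys _) IH ?andbT; first last.
    - exact: us0.
    - by move=> x xin; apply: Hs; rewrite inE xin orbT.
    case: (TP q) => _ -> _ _ /=.
    apply/hasPn => R /mapP[r /flatten_mapP[q' q'in rin] ->].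
    apply/negP => /mapP[r' r'in Er].
    have q'ss : q' \in ss by apply: Hs; rewrite inE q'in orbT.
    case: (TP q') => pT' _ _ _; have [Dr _] := pT' r rin.
    have [_ [x [rx x0]]] := (let: And3 H _ _ := dD in H) _ Dr.
    have E : q.1 = q'.1.
      apply: (unique_piece dDs (proj1 (pss q qin)) (proj1 (pss q' q'ss)) _ _ x0).
      - by apply: (Tsub q qin r' r'in); rewrite -Er.
      - exact: (Tsub q' q'ss r rin).
    by move/negP: qn; apply; rewrite E; apply: map_f.
  have ub := ubig ss (fun q qin => qin) uss.
  have Kbig : (size big <= km)%N.
    by apply: kmax; apply/asboolP; exists D; split=> //; exists big; split.
  have szT q : q \in ss -> (0 < size (T q))%N.
    move=> qin; case: (TP q) => _ _ _ sT; move: (nzs q qin); rewrite -sT.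
    by case: (T q) => //=; rewrite /sumL big_nil eqxx.
  have T1 : size (T p) = 1%N.
    have := sumn_ge szT pin; move: Kbig; rewrite size_flatten /shape -map_comp /comp.
    have := szT p pin; rewrite szs => h1 h2 h3; have h4 := leq_trans h3 h2; lia.
  case: (TP p) => pT _ _ sT; move: T1 sT pT; case: (T p) => [|r [|]] //= _ sT pT.
  have [Dr rr] := pT r (mem_head _ _).
  by exists r.1; split => //; move: sT; rewrite /sumL big_seq1 => <-.
exists [seq (Lam C p.2, p.2) | p <- ss]; split.
  move=> r /mapP[p pin ->] /=; split; last exact: Lam_in.
  by exists p.2; split => //; [exact: pureP | exact: nzs].
by rewrite /sumL big_map -sss.
Qed.

End LimSpan.


Section Zorn.
Variables (K : fieldType) (L V : lmodType K) (act : L -> V -> V) (h : L -> Prop).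
Hypothesis actlin : forall (a : K) x v w, act x (a *: v + w) = a *: act x v + act x w.
Hypothesis wspan : forall v, Defs.span (fun w => exists lam,
   fin_dim (weight_space act h lam) /\ weight_space act h lam w) v.

Lemma Lim_decomp (C : (piece V -> Prop) -> Prop) :
  (forall D, C D -> decomp act D) ->
  (forall D D', C D -> C D' -> refines D D' \/ refines D' D) ->
  (exists D, C D) -> decomp act (LimD C).
Proof.
move=> Cdec Ctot Cne; split.
- by move=> N; apply: LimD_nz.
- move=> v; have [m [u [c [Hu ->]]]] := wspan v.
  apply: (big_ind (fun x => exists s, props (LimD C) s /\ x = sumL s)).
  + by exists [::]; split => //; rewrite /sumL big_nil.
  + move=> x y [s1 [p1 ->]] [s2 [p2 ->]]; exists (s1 ++ s2); split.
      by apply/props_cat.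
    by rewrite /sumL big_cat.
  + move=> i _; have [lam [[n [b hb]] wu]] := Hu i.
    apply: (Lim_span_weight actlin Cdec Ctot Cne hb).
    move=> t ht; rewrite actZ // wu // !scalerA; congr (_ *: _); exact: mulrC.
- exact: (Lim_indep Cdec Ctot Cne).
Qed.

Definition D0 : piece V -> Prop := fun N => N = (fun _ => True) /\ exists v : V, v != 0.

Lemma D0_decomp : decomp act D0.
Proof.
split.
- move=> N [-> [v v0]]; split; last by exists v.
  by split; [split|].
- move=> v; case: (pselect (exists v : V, v != 0)) => [ex|nex].
    exists [:: ((fun _ => True), v)]; split; last by rewrite /sumL big_seq1.
    by move=> p; rewrite inE => /eqP -> /=.
  exists [::]; split => //; rewrite /sumL big_nil.
  by apply/eqP/negPn/negP => vn; apply: nex; exists v.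
- move=> s ps s0 N.
  have kf p : p \in s -> p.1 = (fun _ => True) by move=> /ps [[]].
  case: (boolP (N == (fun _ => True))) => [/eqP ->|nN].
    rewrite -[RHS]s0 /sumL big_seq_cond [RHS]big_seq_cond; apply: eq_bigl => p /=.
    by case: (boolP (p \in s)) => //= /kf ->; rewrite eqxx.
  by rewrite big1_seq // => p /andP[/eqP pN /kf]; rewrite pN => E; move: nN; rewrite E eqxx.
Qed.

Lemma exists_max : exists D, decomp act D /\
  forall D', decomp act D' -> refines D D' -> refines D' D.
Proof.
pose T := {D : piece V -> Prop | decomp act D}.
pose R (a b : T) := `[< refines (sval a) (sval b) >].
have [|||t tmax] := @ZL_preorder T (exist _ D0 D0_decomp) R.
- by move=> a; apply/asboolP; exact: refines_refl.
- by move=> a b c /asboolP ab /asboolP bc; apply/asboolP; exact: refines_trans ab bc.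
- move=> A Atot; case: (pselect (exists a, A a)) => [ne|nne]; last first.
    by exists (exist _ D0 D0_decomp) => s As; exfalso; apply: nne; exists s.
  pose C D := exists a, A a /\ sval a = D.
  have Cdec D : C D -> decomp act D by move=> [a [_ <-]]; exact: (proj2_sig a).
  have Ctot D D' : C D -> C D' -> refines D D' \/ refines D' D.
    move=> [a [Aa <-]] [b [Ab <-]].
    by case: (Atot a b Aa Ab) => /asboolP H; [left|right].
  have Cne : exists D, C D by have [a Aa] := ne; exists (sval a), a.
  exists (exist _ (LimD C) (Lim_decomp Cdec Ctot Cne)) => s As.
  by apply/asboolP; apply: C_refines_Lim; exists s.
exists (sval t); split; first exact: (proj2_sig t).
move=> D' dD' rf; have := tmax (exist _ D' dD').
by move=> /(_ (introT (asboolP _) rf)) /asboolP.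
Qed.

End Zorn.


Section Split.
Variables (K : fieldType) (L V : lmodType K) (act : L -> V -> V).

Lemma max_indec D : decomp act D ->
  (forall D', decomp act D' -> refines D D' -> refines D' D) ->
  forall N, D N -> indecomposable act N.
Proof.
move=> dD Dmax N DN.
have [sN [x [Nx x0]]] := (let: And3 H _ _ := dD in H) N DN.
split=> //; first by exists x.
move=> [N1 [N2 [sN1 sN2 [x1 [N1x1 x10]] [x2 [N2x2 x20]] [sub1 sub2 dec dis]]]].
have sN1' := proj1 sN1; have sN2' := proj1 sN2; have sNN := proj1 sN.
have NN1 : N != N1.
  apply/eqP => E; move/negP: x20; apply; apply/eqP; apply: dis => //.
  by rewrite -E; apply: sub2.
have NN2 : N != N2.
  apply/eqP => E; move/negP: x10; apply; apply/eqP; apply: dis => //.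
  by rewrite -E; apply: sub1.
have N12 : N1 != N2.
  by apply/eqP => E; move/negP: x10; apply; apply/eqP; apply: dis => //; rewrite -E.
have oth M : D M -> M <> N -> M <> N1 /\ M <> N2.
  move=> DM MN; split => E.
    by apply: MN; apply: (unique_piece dD DM DN _ (sub1 _ N1x1) x10); rewrite E.
  by apply: MN; apply: (unique_piece dD DM DN _ (sub2 _ N2x2) x20); rewrite E.
pose D' M := (D M /\ M <> N) \/ M = N1 \/ M = N2.
have D'N M : D' M -> M <> N.
  by case=> [[] //|[->|->]] E; [move/eqP: NN1|move/eqP: NN2]; apply.
have dD' : decomp act D'.
  split.
  - move=> M [[DM _]|[->|->]]; first exact: (let: And3 H _ _ := dD in H) M DM.
      by split=> //; exists x1.
    by split=> //; exists x2.
  - move=> v; have [_ /(_ v) [s [ps ->]] _] := dD.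
    elim: s ps => [|p s IH] ps; first by exists [::].
    have [[Dp pp] ps'] := (props_cons D p s).1 ps.
    have [s' [ps'' ss']] := IH ps'.
    case: (pselect (p.1 = N)) => [pN|pN].
      have Np : N p.2 by rewrite -pN.
      have [v1 [v2 [N1v1 N2v2 e]]] := dec p.2 Np.
      exists [:: (N1, v1), (N2, v2) & s']; split.
        apply/props_cons; split; [by split=> //; right; left|].
        by apply/props_cons; split; [by split=> //; right; right|].
      by rewrite /sumL in ss' *; rewrite !big_cons ss' e addrA.
    exists (p :: s'); split; first by apply/props_cons; split=> //; split=> //; left.
    by rewrite /sumL in ss' *; rewrite !big_cons ss'.
  - move=> s ps s0 M'.
    pose f (R : piece V) := if (R == N1) || (R == N2) then N else R.
    have fP p : p \in s -> D (f p.1) /\ f p.1 p.2.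
      move=> pin; have [[[Dp pN]|[E|E]] pp] := ps p pin; rewrite /f.
      + by have [/eqP/negbTE -> /eqP/negbTE ->] := oth _ Dp pN.
      + by rewrite E eqxx /=; split=> //; apply: sub1; rewrite -E.
      + by rewrite E eqxx orbT /=; split=> //; apply: sub2; rewrite -E.
    pose sD := [seq (f p.1, p.2) | p <- s].
    have psD : props D sD by move=> r /mapP[p pin ->]; exact: fP.
    have ssD : sumL sD = 0 by rewrite /sumL big_map.
    have H M : \sum_(p <- s | f p.1 == M) p.2 = 0.
      by have [_ _ /(_ sD psD ssD M)] := dD; rewrite big_map.
    have fN p : p \in s -> (f p.1 == N) = (p.1 == N1) || (p.1 == N2).
      move=> pin; rewrite /f; case: ifP => [_|_]; first by rewrite eqxx.
      by apply/eqP => E; apply: (D'N p.1); [case: (ps p pin)|].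
    have HN : \sum_(p <- s | (p.1 == N1) || (p.1 == N2)) p.2 = 0.
      apply: etrans _ (H N); rewrite big_seq_cond [RHS]big_seq_cond; apply: eq_bigl => p /=.
      by case: (boolP (p \in s)) => //= pin; rewrite fN.
    rewrite (bigID (fun p => p.1 == N1)) /= in HN.
    have e1 : \sum_(p <- s | ((p.1 == N1) || (p.1 == N2)) && (p.1 == N1)) p.2 =
              \sum_(p <- s | p.1 == N1) p.2.
      by apply: eq_bigl => p; case: (p.1 == N1); rewrite ?andbT ?andbF. 
    have e2 : \sum_(p <- s | ((p.1 == N1) || (p.1 == N2)) && ~~ (p.1 == N1)) p.2 =
              \sum_(p <- s | p.1 == N2) p.2.
      apply: eq_bigl => p; case: (boolP (p.1 == N1)) => [/eqP ->|_]; last by rewrite andbT.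
      by rewrite /= (negbTE N12).
    rewrite e1 e2 in HN.
    set a := \sum_(p <- s | p.1 == N1) p.2 in HN.
    set b := \sum_(p <- s | p.1 == N2) p.2 in HN.
    have Na : N1 a.
      rewrite /a big_seq_cond; apply: subsum => // p /andP[pin /eqP E].
      by rewrite -E; case: (ps p pin).
    have Nb : N2 b.
      rewrite /b big_seq_cond; apply: subsum => // p /andP[pin /eqP E].
      by rewrite -E; case: (ps p pin).
    have a0 : a = 0.
      apply: dis => //; have -> : a = - b by apply/eqP; rewrite -addr_eq0 HN.
      exact: subN.
    have b0 : b = 0 by move: HN; rewrite a0 add0r.
    case: (boolP (M' == N1)) => [/eqP -> //|M1].
    case: (boolP (M' == N2)) => [/eqP -> //|M2].
    case: (boolP (M' == N)) => [/eqP ->|MN].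
      rewrite big1_seq // => p /andP[/eqP E pin]; exfalso.
      by apply: (D'N p.1); [case: (ps p pin)|].
    apply: etrans _ (H M'); rewrite big_seq_cond [RHS]big_seq_cond; apply: eq_bigl => p /=.
    case: (boolP (p \in s)) => //= pin; rewrite /f.
    case: ifP => // /orP[] /eqP ->; rewrite eq_sym.
      by rewrite (negbTE M1) eq_sym (negbTE MN).
    by rewrite (negbTE M2) eq_sym (negbTE MN).
have rf : refines D D'.
  move=> M [[DM _]|[->|->]]; first by exists M; split=> // y.
    by exists N.
  by exists N.
have [M' [[[DM' M'N]|[E|E]] NM']] := Dmax D' dD' rf N DN.
- by apply: M'N; apply: (unique_piece dD DM' DN (NM' _ Nx) Nx x0).
- move/negP: x20; apply; apply/eqP; apply: dis => //; rewrite -E; apply: NM'.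
  exact: sub2.
- move/negP: x10; apply; apply/eqP; apply: dis => //; rewrite -E; apply: NM'.
  exact: sub1.
Qed.
End Split.


Lemma general_decomp (K : fieldType) (L V : lmodType K) (act : L -> V -> V) (h : L -> Prop) :
  (forall (a : K) x v w, act x (a *: v + w) = a *: act x v + act x w) ->
  (forall v, Defs.span (fun w => exists lam,
     fin_dim (weight_space act h lam) /\ weight_space act h lam w) v) ->
  exists (I : Type) (Ns : I -> V -> Prop),
    (forall i, indecomposable act (Ns i)) /\ direct_sum_family Ns.
Proof.
move=> actlin wspan.
have [D [dD Dmax]] := exists_max actlin wspan.
exists {N : piece V | D N}, (fun i => sval i); split.
  by move=> [N DN]; exact: (max_indec dD Dmax DN).
split.
  move=> v; have [_ /(_ v) [s [ps ->]] _] := dD.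
  pose x0 : piece V * V := (fun _ => False, 0%R).
  have Hj (j : 'I_(size s)) : D (nth x0 s j).1 /\ (nth x0 s j).1 (nth x0 s j).2.
    by apply: ps; apply: mem_nth.
  exists (size s), (fun j => exist _ _ (proj1 (Hj j))), (fun j => (nth x0 s j).2).
  split; first by move=> j; exact: (proj2 (Hj j)).
  by rewrite /sumL (big_nth x0) big_mkord.
move=> k f w finj Hw s0 j.
pose s := [seq (sval (f i), w i) | i : 'I_k <- enum 'I_k].
have ps : props D s by move=> p /mapP[i _ ->]; split; [exact: (proj2_sig (f i))|exact: Hw].
have ss : sumL s = 0%R.
  rewrite /sumL big_map big_enum /=; apply: etrans _ s0.
  by apply: eq_bigl => i; rewrite inE.
have [_ _ /(_ s ps ss (sval (f j)))] := dD.
rewrite big_map big_enum_cond /= (big_pred1 j) // => i /=.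
apply/eqP/eqP => [E|->//]; apply: finj.
move: E; case: (f i) => a Ha; case: (f j) => b Hb /= E; subst b.
by congr exist; apply: Prop_irrelevance.
Qed.

Unset Implicit Arguments.
Close Scope ring_scope.

Theorem mainTheorem7 (K : closedFieldType) (L : lmodType K)
    (br : L -> L -> L) (gs Hs : nat -> L -> Prop) (h : L -> Prop)
    (P : (L -> K) -> Prop) :
  [pchar K]%R =i pred0 ->
  root_reductive br gs Hs ->
  splitting_max_toral br gs h ->
  positive_system br h P ->
  dynkin br h P ->
  forall (V : lmodType K) (act : L -> V -> V),
    lie_module br act -> in_Obar br act h P ->
    exists (I : Type) (Ns : I -> V -> Prop),
      (forall i, indecomposable act (Ns i)) /\ direct_sum_family Ns.
Proof.
move=> _ _ _ _ _ V act [_ actlin _] [wspan wfin _].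
apply: (general_decomp (h := h) actlin) => v.
have [m [u [c [Hu ->]]]] := wspan v.
exists m, u, c; split => // i; have [lam [hl hw]] := Hu i.
by exists lam; split => //; apply: wfin.
Qed.
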